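(* Let $d$ be an even positive integer and $s$ a positive integer with $2s\leqslant d$. Let $\varepsilon,\gamma\in I^s\setminus\{\alpha,\omega\}$, $i=t(\varepsilon)$, $j=t(\gamma)$, and suppose $\varepsilon_s=0$. If either (1) $\varepsilon_s=\gamma_s=0$, or (2) $\gamma_s=1$ and $j\geqslant i$, then for every $x\in B_\varepsilon$ and $y\in B_\gamma$ we have $\langle\varepsilon,\gamma\rangle\leqslant\langle x,y\rangle$.
   Context: Let $I=\{0,1\}$; for binary vectors $x,y$ of the same length, $|x|=\sum_i x_i$ and $\langle x,y\rangle=\sum_i x_iy_i$. Let $\alpha=(0,\ldots,0)$, $\omega=(1,\ldots,1)\in I^s$. For $\varepsilon\in I^s\setminus\{\alpha,\omega\}$ let $t(\varepsilon)$ be the unique index $i$ with $\varepsilon_i\neq\varepsilon_{i+1}=\cdots=\varepsilon_s$, and $A_\varepsilon=\{\varepsilon_1\}\times\cdots\times\{\varepsilon_i\}\times I^{s-1-i}\subseteq I^{s-1}$ with $i=t(\varepsilon)$. Define subsets of $I^{d-s}$: $X_0=\{x\colon |x|\leqslant \frac d2-s\}$; $X_k=\{x\colon |x|=\frac d2-s+k\}$ for $0<k<s$; $X_s=\{x\colon |x|\geqslant \frac d2\}$. Writing $x\in I^{d-s}$ as $x=(x',x'')\in I^{d-2s+1}\times I^{s-1}$, for $\varepsilon\in I^s\setminus\{\alpha,\omega\}$ set $B_\varepsilon=X_{|\varepsilon|}\cap(I^{d-2s+1}\times A_\varepsilon)$. *)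

(* Defs.v *)
From mathcomp Require Import all_boot.
Set Implicit Arguments. Unset Strict Implicit. Unset Printing Implicit Defensive.

(* Binary vectors in I^n are represented as [seq bool] of size n;
   the paper's (1-based) coordinate x_k is [nth false x (k-1)]. *)

Definition wt (x : seq bool) : nat := count id x.

Definition ip (x y : seq bool) : nat := count (fun p => p.1 && p.2) (zip x y).

(* t(eps): the (1-based) index i with eps_i <> eps_{i+1} = ... = eps_s,
   i.e. the largest i < s with eps_i <> eps_{i+1}. *)
Definition tidx (eps : seq bool) : nat :=
  \max_(k < size eps | (k.+1 < size eps) &&
        (nth false eps k != nth false eps k.+1)) k.+1.

Definition inX (d s k : nat) (x : seq bool) : bool :=
  (size x == d - s) &&
  (if k == 0 then wt x <= d./2 - s
   else if k < s then wt x == d./2 - s + k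
   else d./2 <= wt x).

Definition inA (eps z : seq bool) : bool :=
  (size z == (size eps).-1) &&
  all (fun k => nth false z k == nth false eps k) (iota 0 (tidx eps)).

(* x \in B_eps = X_{|eps|} \cap (I^{d-2s+1} x A_eps), with x'' the last s-1 coordinates *)
Definition inB (d s : nat) (eps x : seq bool) : bool :=
  inX d s (wt eps) x && inA eps (drop (d - 2 * s + 1) x).

(* Main.v *)
Require Import Defs.
From mathcomp Require Import all_boot zify.

Lemma ipE a b : size a = size b ->
  ip a b = \sum_(0 <= k < size a) (nth false a k && nth false b k).
Proof.
elim: a b => [|u a IH] [|v b] //=; first by rewrite big_geq.
case=> e; rewrite big_nat_recl // -IH //.
Qed.

Lemma tidx_le e : tidx e <= (size e).-1.
Proof.
rewrite /tidx; apply/bigmax_leqP => k /andP[h _].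
by rewrite -ltnS prednK // (leq_trans _ h).
Qed.

Lemma tidx_const e k : tidx e <= k -> k < size e ->
  nth false e k = nth false e (size e).-1.
Proof.
move=> h1 h2.
move Hn: ((size e).-1 - k) => n.
elim: n k h1 h2 Hn => [|n IH] k h1 h2 Hn.
  have -> : k = (size e).-1 by move: Hn h2; case: (size e) => //= sz; rewrite ltnS => /eqP; rewrite subn_eq0 => ? ?; apply/eqP; rewrite eqn_leq; apply/andP.
  by [].
have hk : k.+1 < size e.
  by move: Hn h2; case: (size e) => //= sz; rewrite ltnS => H _; rewrite ltnS ltnNge -subn_eq0 H.
have -> : nth false e k = nth false e k.+1.
  apply/eqP; apply/negPn/negP => hne.
  have : k.+1 <= tidx e.
    by apply: (@leq_bigmax_cond _ _ (fun i : 'I_(size e) => (nat_of_ord i).+1) (Ordinal h2)); rewrite /= hk hne.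
  by rewrite ltnNge h1.
apply: IH => //; first exact: leqW.
by rewrite subnS Hn.
Qed.

Lemma sum_cut (F : nat -> nat) m N : m <= N -> (forall k, m <= k < N -> F k = 0) ->
  \sum_(0 <= k < N) F k = \sum_(0 <= k < m) F k.
Proof.
move=> hmN h; rewrite (big_cat_nat _ (n:=m)) //=.
rewrite [X in _ + X](_ : _ = 0) ?addn0 //.
by rewrite big_nat_cond big1 // => k /andP[hk _]; exact: h.
Qed.

Lemma sum_window (F : nat -> nat) n m N : n + m <= N ->
  \sum_(0 <= k < m) F (k + n) <= \sum_(0 <= k < N) F k.
Proof.
move=> h.
rewrite [X in _ <= X](big_cat_nat _ (n:=n + m)) //=.
rewrite [X in _ <= X + _](@big_cat_nat _ _ _ n 0 (n + m)) ?leq_addr //=.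
have -> : \sum_(n <= i < n + m) F i = \sum_(0 <= k < m) F (k + n).
  by rewrite -{1}(add0n n) big_addn addKn.
lia.
Qed.

Lemma inA_nth e x n k : inA e (drop n x) -> k < tidx e -> nth false x (n + k) = nth false e k.
Proof.
case/andP=> _ /allP h hk.
have := h k; rewrite mem_iota add0n hk => /(_ isT) /eqP.
by rewrite nth_drop.
Qed.

Theorem lemma2 (d s : nat) (eps gam : seq bool) :
  0 < d -> ~~ odd d -> 0 < s -> 2 * s <= d ->
  size eps = s -> size gam = s ->
  eps <> nseq s false -> eps <> nseq s true ->
  gam <> nseq s false -> gam <> nseq s true ->
  nth false eps s.-1 = false ->
  (nth false gam s.-1 = false \/
   (nth false gam s.-1 = true /\ tidx eps <= tidx gam)) ->
  forall x y : seq bool, inB d s eps x -> inB d s gam y ->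
  ip eps gam <= ip x y.
Proof.
move=> _ _ s0 h2s se sg _ _ _ _ es hc x y /andP[/andP[/eqP sx _] Ax] /andP[/andP[/eqP sy _] Ay].
set m := if nth false gam s.-1 then tidx eps else minn (tidx eps) (tidx gam).
have mi : m <= tidx eps by rewrite /m; case: ifP => _ //; exact: geq_minl.
have mj : m <= tidx gam.
  by rewrite /m; case: hc => [->|[-> ->]] //; exact: geq_minr.
have ti : tidx eps <= s.-1 by rewrite -se tidx_le.
have key : forall k, m <= k < s -> nth false eps k && nth false gam k = false.
  move=> k /andP[h1 h2].
  rewrite /m in h1; case: hc => [hg|[hg _]]; rewrite hg in h1.
    case: (leqP (tidx eps) k) => hk.
      by rewrite tidx_const ?se // es.
    have hk' : tidx gam <= k.
      by move: h1; rewrite geq_min leqNgt hk.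
    by rewrite (@tidx_const gam) ?sg // hg andbF.
  by rewrite tidx_const ?se // es.
rewrite ipE ?se ?sg // (@sum_cut _ m); last 2 first.
  by rewrite (leq_trans mi) // (leq_trans ti) // leq_pred.
  by move=> k hk; rewrite key.
rewrite ipE ?sx ?sy //.
set n := d - 2 * s + 1.
apply: leq_trans (@sum_window (fun k => nth false x k && nth false y k) n m _ _); last first.
  rewrite /n (leq_trans (leq_add (leqnn _) (leq_trans mi ti))) //.
  by apply: eq_leq; move: s0 h2s; clear; lia.
rewrite leq_eqVlt; apply/orP; left; apply/eqP; apply: eq_big_nat => k /andP[_ hk].
rewrite addnC (inA_nth _ _ _ _ Ax) ?(inA_nth _ _ _ _ Ay) //.
  exact: leq_trans hk mj.
exact: leq_trans hk mi.
Qed.
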